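(* Let $R$ be a subring of $\mathbb{Q}$, let $\Phi$ be a set of finite-rank-free-by-1 $R$-modules, and let $G$ be a torsion-free $R$-module with nucleus $R$ which is both $\Phi$-complete and $\Phi$-represented. Then $G$ is a splitter, i.e. $\mathrm{Ext}(G,G)=0$.
   Context: For a torsion-free group $X\neq0$, $\mathrm{nuc}\,X$ is the largest subring of $\mathbb{Q}$ over which $X$ is a module. Let $n\le\omega$. Let $B$ be the free $R$-module with basis $\{x_i:i<n\}\cup\{y_m:m\in\omega\}$, let $p_m\in R\setminus\{0\}$ and $k_{im}\in R$ with, for each $m$, $k_{im}=0$ for all but finitely many $i$, and let $N$ be the submodule generated by $y_{m+1}p_m-y_m-\sum_{i<n}x_ik_{im}$ $(m\in\omega)$. An $R$-module $G'$ is $n$-free-by-1 if $G'\cong B/N$ for such data, $G'$ is not free, and, if $n$ is finite, every $R$-submodule of $G'$ of rank $\le n$ is free; it is finite-rank-free-by-1 if it is $n$-free-by-1 for some finite $n$. $G$ is $\Phi$-complete if $\mathrm{Ext}(G',G)=0$ for all $G'\in\Phi$. $G$ is $\Phi$-represented if $G=\bigcup_{\alpha<\lambda}G_\alpha$ for an ascending continuous chain of $R$-submodules with $G_0=0$ and each $G_{\alpha+1}/G_\alpha$ isomorphic to a member of $\Phi$ or to a free $R$-module. *)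

(* Defs.v *)
(* Subrings of Q are predicates on [rat]; R-modules are
   abelian groups (zmodType) with an explicit scalar action of the elements
   of R (the action outside R is irrelevant). *)
From HB Require Import structures.
From mathcomp Require Import all_boot all_order all_algebra.
Set Implicit Arguments. Unset Strict Implicit. Unset Printing Implicit Defensive.
Import Order.TTheory GRing.Theory Num.Theory.
Local Open Scope ring_scope.

Definition is_rmod (R : {pred rat}) (M : zmodType) (act : rat -> M -> M) :=
  [/\ forall x, act 1 x = x,
      forall r x y, r \in R -> act r (x + y) = act r x + act r y,
      forall r s x, r \in R -> s \in R -> act (r + s) x = act r x + act s x
    & forall r s x, r \in R -> s \in R -> act (r * s) x = act r (act s x)].

Definition torsion_free (M : zmodType) := forall (n : nat) (x : M), x *+ n.+1 = 0 -> x = 0.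

Definition module_over (S : {pred rat}) (M : zmodType) :=
  exists act : rat -> M -> M, is_rmod S act.

Definition nucleus_is (R : {pred rat}) (M : zmodType) :=
  [/\ exists x : M, x != 0, module_over R M &
      forall S : {pred rat}, subring_closed S -> module_over S M -> {subset S <= R}].

(* Ext(A,B) = 0 (over Z): every extension 0 -> B -> E -> A -> 0 of abelian
   groups splits. *)
Definition Ext_zero (A B : zmodType) :=
  forall (E : zmodType) (i : B -> E) (q : E -> A),
    (forall x y, i (x + y) = i x + i y) ->
    (forall x y, q (x + y) = q x + q y) ->
    injective i -> (forall a, exists e, q e = a) ->
    (forall e, q e = 0 <-> exists b, e = i b) ->
    exists s : A -> E, (forall x y, s (x + y) = s x + s y) /\ (forall a, q (s a) = a).

Definition splitter (G : zmodType) := Ext_zero G G.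

Definition is_submod (R : {pred rat}) (M : zmodType) (act : rat -> M -> M)
    (S : M -> Prop) :=
  [/\ S 0, forall x y, S x -> S y -> S (x - y) & forall r x, r \in R -> S x -> S (act r x)].

Definition free_submod (R : {pred rat}) (M : zmodType) (act : rat -> M -> M)
    (S : M -> Prop) :=
  exists (J : eqType) (b : J -> M),
    [/\ forall j, S (b j),
        forall (s : seq J) (c : J -> rat), uniq s -> (forall j, c j \in R) ->
          \sum_(j <- s) act (c j) (b j) = 0 -> forall j, j \in s -> c j = 0
      & forall x, S x -> exists (s : seq J) (c : J -> rat),
          (forall j, c j \in R) /\ x = \sum_(j <- s) act (c j) (b j)].

Definition free_rmod (R : {pred rat}) (M : zmodType) (act : rat -> M -> M) :=
  free_submod R act (fun _ => True).

Definition rank_le (M : zmodType) (S : M -> Prop) (n : nat) :=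
  forall v : 'I_n.+1 -> M, (forall j, S (v j)) ->
    exists c : 'I_n.+1 -> int, (exists j, c j != 0) /\ \sum_(j < n.+1) v j *~ c j = 0.

(* Membership in N of the formal element  sum_i x_i a_i + sum_m y_m b_m  of B:
   it is an R-combination sum_m c_m (y_{m+1} p_m - y_m - sum_i x_i k_im). *)
Definition in_relations (R : {pred rat}) (n : nat) (p : nat -> rat)
    (k : 'I_n -> nat -> rat) (a : 'I_n -> rat) (b : nat -> rat) :=
  exists (M' : nat) (c : nat -> rat),
    [/\ forall m, c m \in R, forall m, (M' <= m)%N -> c m = 0,
        forall i, a i = - \sum_(m < M') c m * k i m
      & forall m, b m = (if m is m'.+1 then c m' * p m' else 0) - c m].

(* H is isomorphic to B/N via x_i |-> x i, y_m |-> y m *)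
Definition presented_by (R : {pred rat}) (H : zmodType) (act : rat -> H -> H)
    (n : nat) (p : nat -> rat) (k : 'I_n -> nat -> rat) :=
  exists (x : 'I_n -> H) (y : nat -> H),
    (forall h : H, exists (a : 'I_n -> rat) (b : nat -> rat) (M : nat),
        (forall i, a i \in R) /\ (forall m, b m \in R) /\
        h = \sum_(i < n) act (a i) (x i) + \sum_(m < M) act (b m) (y m)) /\
    (forall (a : 'I_n -> rat) (b : nat -> rat) (M : nat),
        (forall i, a i \in R) -> (forall m, b m \in R) ->
        (forall m, (M <= m)%N -> b m = 0) ->
        (\sum_(i < n) act (a i) (x i) + \sum_(m < M) act (b m) (y m) = 0
          <-> in_relations R p k a b)).

Definition n_free_by_1 (R : {pred rat}) (n : nat) (H : zmodType) (act : rat -> H -> H) :=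
  [/\ exists (p : nat -> rat) (k : 'I_n -> nat -> rat),
        [/\ forall m, p m \in R, forall m, p m != 0,
            forall i m, k i m \in R & presented_by R act p k],
      ~ free_rmod R act
    & forall S : H -> Prop, is_submod R act S -> rank_le S n -> free_submod R act S].

Definition fin_rank_free_by_1 (R : {pred rat}) (H : zmodType) (act : rat -> H -> H) :=
  exists n : nat, n_free_by_1 R n act.

Definition modclass := forall H : zmodType, (rat -> H -> H) -> Prop.

Definition Phi_complete (Phi : modclass) (G : zmodType) :=
  forall (H : zmodType) (actH : rat -> H -> H), Phi H actH -> Ext_zero H G.

Definition quotient_iso (R : {pred rat}) (G : zmodType) (actG : rat -> G -> G)
    (Ga Gb : G -> Prop) (H : zmodType) (actH : rat -> H -> H) :=
  exists f : G -> H,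
    [/\ forall x y, Gb x -> Gb y -> f (x + y) = f x + f y,
        forall r x, r \in R -> Gb x -> f (actG r x) = actH r (f x),
        forall h, exists x, Gb x /\ f x = h
      & forall x, Gb x -> (f x = 0 <-> Ga x)].

(* Phi-represented: an ascending continuous chain (G_alpha)_{alpha < lambda}
   of submodules, indexed by a well-ordered set (I, lt), with G_0 = 0,
   union G, and successive quotients isomorphic to a member of Phi or free. *)
Definition Phi_represented (R : {pred rat}) (Phi : modclass) (G : zmodType)
    (actG : rat -> G -> G) :=
  exists (I : Type) (lt : I -> I -> Prop) (C : I -> G -> Prop),
    [/\ well_founded lt /\ (forall a b c, lt a b -> lt b c -> lt a c) /\
          (forall a b, lt a b \/ a = b \/ lt b a),
        (forall a, is_submod R actG (C a)) /\
        (forall a b x, lt a b -> C a x -> C b x),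
        forall a, (forall b, ~ lt b a) -> forall x, C a x -> x = 0,
        (* continuity at limits *)
        (forall a, (exists b, lt b a) -> (forall b, lt b a -> exists c, lt b c /\ lt c a) ->
          forall x, C a x -> exists b, lt b a /\ C b x) /\
        (forall x, exists a, C a x)
      & (* b = a + 1 *)
        forall a b, lt a b -> (forall c, lt a c -> ~ lt c b) ->
          exists (H : zmodType) (actH : rat -> H -> H),
            (Phi H actH \/ (is_rmod R actH /\ free_rmod R actH)) /\
            quotient_iso R actG (C a) (C b) actH].

(* Main.v *)
Require Import Defs.
From HB Require Import structures.
From mathcomp Require Import all_boot all_order all_algebra.
From mathcomp Require Import ring.
From Stdlib Require Import ClassicalEpsilon FunctionalExtensionality Classical.
Set Implicit Arguments. Unset Strict Implicit. Unset Printing Implicit Defensive.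
Import GRing.Theory Num.Theory.
Local Open Scope ring_scope.


Record cocycle (G H : zmodType) := Cocycle {
  cf :> H -> H -> G;
  cf0 : forall h, cf 0 h = 0;
  cfC : forall h k, cf h k = cf k h;
  cfA : forall h k l, cf h k + cf (h + k) l = cf k l + cf h (k + l) }.

Definition twist (G H : zmodType) (c : cocycle G H) : Type := (G * H)%type.
HB.instance Definition _ (G H : zmodType) (c : cocycle G H) :=
  Choice.copy (twist c) (G * H)%type.

Definition tadd (G H : zmodType) (c : cocycle G H) (x y : twist c) : twist c :=
  (x.1 + y.1 + c x.2 y.2, x.2 + y.2).
Definition topp (G H : zmodType) (c : cocycle G H) (x : twist c) : twist c :=
  (- x.1 - c x.2 (- x.2), - x.2).
Definition tzero (G H : zmodType) (c : cocycle G H) : twist c := (0, 0).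

Lemma taddA (G H : zmodType) (c : cocycle G H) : associative (@tadd G H c).
Proof.
move=> [x1 x2] [y1 y2] [z1 z2]; rewrite /tadd /=; congr (_, _); last by rewrite addrA.
rewrite (ACl ((1*2*4)*(3*5))%AC) /= cfA.
by rewrite !addrA.
Qed.

Lemma taddC (G H : zmodType) (c : cocycle G H) : commutative (@tadd G H c).
Proof.
by move=> [x1 x2] [y1 y2]; rewrite /tadd /= cfC [x1 + _]addrC [x2 + _]addrC.
Qed.

Lemma tadd0 (G H : zmodType) (c : cocycle G H) : left_id (tzero c) (@tadd G H c).
Proof. by move=> [x1 x2]; rewrite /tadd /= cf0 !add0r addr0. Qed.

Lemma taddN (G H : zmodType) (c : cocycle G H) : left_inverse (tzero c) (@topp G H c) (@tadd G H c).
Proof.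
move=> [x1 x2]; rewrite /tadd /tzero /=; congr (_, _); last by rewrite addNr.
by rewrite [c (- x2) x2]cfC addrAC subrK addNr.
Qed.

HB.instance Definition _ (G H : zmodType) (c : cocycle G H) :=
  GRing.isZmodule.Build (twist c) (@taddA G H c) (@taddC G H c) (@tadd0 G H c) (@taddN G H c).

Lemma twaddE (G H : zmodType) (c : cocycle G H) (x y : twist c) :
  x + y = (x.1 + y.1 + c x.2 y.2, x.2 + y.2).
Proof. by []. Qed.


Definition additive_on (A B : zmodType) (P : A -> Prop) (f : A -> B) :=
  forall x y, P x -> P y -> f (x + y) = f x + f y.
Definition subclosed (A : zmodType) (P : A -> Prop) :=
  P 0 /\ forall x y, P x -> P y -> P (x - y).

Lemma sc_add (A : zmodType) (P : A -> Prop) x y : subclosed P -> P x -> P y -> P (x + y).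
Proof.
move=> [P0 PB] Px Py; rewrite -[y]opprK -[- y]sub0r; apply: (PB) => //; exact: (PB).
Qed.

Lemma sc_opp (A : zmodType) (P : A -> Prop) x : subclosed P -> P x -> P (- x).
Proof. by move=> [P0 PB] Px; rewrite -sub0r; apply: (PB). Qed.

Lemma ao0 (A B : zmodType) (P : A -> Prop) (f : A -> B) :
  subclosed P -> additive_on P f -> f 0 = 0.
Proof.
move=> [P0 _] fA; have := fA 0 0 P0 P0; rewrite addr0.
by move/(congr1 (fun z => z - f 0)); rewrite addrK subrr.
Qed.

Lemma aoB (A B : zmodType) (P : A -> Prop) (f : A -> B) x y :
  subclosed P -> additive_on P f -> P x -> P y -> f (x - y) = f x - f y.
Proof.
move=> [P0 PB] fA Px Py; have := fA (x - y) y (PB _ _ Px Py) Py.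
by rewrite subrK => ->; rewrite addrK.
Qed.

Lemma aoN (A B : zmodType) (P : A -> Prop) (f : A -> B) x :
  subclosed P -> additive_on P f -> P x -> f (- x) = - f x.
Proof.
move=> sP fA Px; rewrite -sub0r (aoB sP fA) ?(ao0 sP fA) ?sub0r //; exact: sP.1.
Qed.

Lemma sc_T (A : zmodType) : subclosed (fun _ : A => True).
Proof. by []. Qed.


Lemma zid1 (V : zmodType) (a b x y z u v : V) :
  (a - x - y - u) + (b - a - z - v) = b - x - y - z - (u + v).
Proof.
rewrite !addrA (ACl ((1*6)*5*2*3*7*4*8)%AC) /= addrN add0r.
by rewrite opprD !addrA.
Qed.

Lemma zid2 (V : zmodType) (a b x y z : V) :
  (a - x - y) + (b - a - z) = b - x - y - z.
Proof. by rewrite !addrA (ACl ((1*5)*4*2*3*6)%AC) /= addrN add0r. Qed.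

Lemma zid3 (V : zmodType) (A B C P Q S U W : V) :
  C - (P + Q + (C - A - B - S)) + (U + W - S) = A - P + U + (B - Q + W).
Proof.
rewrite !opprD !opprK !addrA (ACl ((1*4)*(7*10)*5*2*8*6*3*9)%AC) /= !addrN !add0r.
by rewrite ?addrA.
Qed.

Lemma zrot (V : zmodType) (b x y z : V) : b - x - y - z = b - y - z - x.
Proof. by rewrite (addrAC b (-x)) (addrAC (b - y) (-x)). Qed.

Lemma zid4 (V : zmodType) (x y a b c : V) :
  x + y - c = (x - a) + (y - b) - (c - a - b).
Proof.
rewrite !opprD !opprK !addrA (ACl ((2*6)*(4*7)*1*3*5)%AC) /= !addNr !add0r.
by rewrite ?addrA.
Qed.


Lemma ext_step (G H E : zmodType) (i : G -> E) (q : E -> G)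
  (iA : additive_on (fun _ => True) i) (qA : additive_on (fun _ => True) q)
  (iI : injective i) (qS : forall g, exists e, q e = g)
  (qK : forall e, q e = 0 <-> exists g, e = i g)
  (Ga Gb : G -> Prop) (sGa : subclosed Ga) (sGb : subclosed Gb)
  (Gab : forall x, Ga x -> Gb x)
  (f : G -> H) (fA : additive_on Gb f) (fS : forall h, exists x, Gb x /\ f x = h)
  (fK : forall x, Gb x -> (f x = 0 <-> Ga x))
  (sa : G -> E) (saA : additive_on Ga sa) (saq : forall x, Ga x -> q (sa x) = x)
  (HE : Ext_zero H G) :
  exists sb : G -> E, [/\ additive_on Gb sb, forall x, Gb x -> q (sb x) = x
     & forall x, Ga x -> sb x = sa x].
Proof.
have f0 : f 0 = 0 := ao0 sGb fA.
have i0 : i 0 = 0 := ao0 (@sc_T _) iA.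
have q0 : q 0 = 0 := ao0 (@sc_T _) qA.
have sa0 : sa 0 = 0 := ao0 sGa saA.
have qB x y : q (x - y) = q x - q y by exact: (aoB (@sc_T _) qA).
have iB x y : i (x - y) = i x - i y by exact: (aoB (@sc_T _) iA).
have fB x y : Gb x -> Gb y -> f (x - y) = f x - f y by exact: (aoB sGb fA).
have saB x y : Ga x -> Ga y -> sa (x - y) = sa x - sa y by exact: (aoB sGa saA).
have GbB x y : Gb x -> Gb y -> Gb (x - y) by exact: sGb.2.
have GaB x y : Ga x -> Ga y -> Ga (x - y) by exact: sGa.2.
have qi g : q (i g) = 0 by apply/qK; exists g.
have [L [LGb Lf L0]] : exists L : H -> G,
    [/\ forall h, Gb (L h), forall h, f (L h) = h & L 0 = 0].
  pose L1 h := proj1_sig (constructive_indefinite_description _ (fS h)).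
  have L1P h : Gb (L1 h) /\ f (L1 h) = h := proj2_sig (constructive_indefinite_description _ (fS h)).
  exists (fun h => if h == 0 then 0 else L1 h); split.
  - by move=> h; case: eqP => _; [exact: sGb.1 | exact: (L1P h).1].
  - by move=> h; case: eqP => [->|_]; [exact: f0 | exact: (L1P h).2].
  - by rewrite eqxx.
have [T [qT T0]] : exists T : G -> E, (forall g, q (T g) = g) /\ T 0 = 0.
  pose T1 g := proj1_sig (constructive_indefinite_description _ (qS g)).
  have T1P g : q (T1 g) = g := proj2_sig (constructive_indefinite_description _ (qS g)).
  exists (fun g => if g == 0 then 0 else T1 g); split.
  - by move=> g; case: eqP => [->|_]; [exact: q0 | exact: T1P].
  - by rewrite eqxx.
pose l h := T (L h).
have ql h : q (l h) = L h by exact: qT.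
have l0 : l 0 = 0 by rewrite /l L0 T0.
pose dl h k := L (h + k) - L h - L k.
have dlGa h k : Ga (dl h k).
  apply/fK; first by rewrite /dl; apply: (GbB); [apply: (GbB)|].
  rewrite /dl !fB ?Lf; try apply: (GbB); try exact: (LGb).
  by rewrite [h + k]addrC addrK subrr.
pose d h k := l (h + k) - l h - l k - sa (dl h k).
have qd h k : q (d h k) = 0.
  by rewrite /d !qB !ql saq // /dl subrr.
pose c h k := proj1_sig (constructive_indefinite_description _ (proj1 (qK _) (qd h k))).
have ic h k : d h k = i (c h k) := proj2_sig (constructive_indefinite_description _ (proj1 (qK _) (qd h k))).
have c0 h : c 0 h = 0.
  apply: iI; rewrite -ic i0 /d /dl !add0r l0 L0 !subr0 subrr subrr sa0.
  by rewrite subrr.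
have dC h k : d h k = d k h.
  by rewrite /d /dl [k + h]addrC (addrAC (l (h + k))) (addrAC (L (h + k))).
have cC h k : c h k = c k h by apply: iI; rewrite -!ic.
have dA h k m : d h k + d (h + k) m =
    l (h + k + m) - l h - l k - l m - sa (L (h + k + m) - L h - L k - L m).
  rewrite /d zid1 -saA //.
  by rewrite /dl zid2.
have cA h k m : c h k + c (h + k) m = c k m + c h (k + m).
  apply: iI; rewrite !iA // -!ic dA (dC h (k + m)) dA.
  have -> : k + m + h = h + k + m by rewrite addrC addrA.
  by rewrite (zrot _ (l h)) (zrot _ (L h)).
pose cc := Cocycle c0 cC cA.
have := HE (twist cc) (fun g => (g, 0) : twist cc) (fun x : twist cc => x.2).
case.
- by move=> x y; rewrite twaddE /= c0 addr0 add0r.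
- by move=> x y; rewrite twaddE.
- by move=> x y [].
- by move=> a; exists (0, a).
- move=> [e1 e2] /=; split; first by move=> ->; exists e1.
  by case=> g [_ ->].
move=> sg [sgA sgq].
pose g h := (sg h).1.
have gA h k : g (h + k) = g h + g k + c h k.
  by rewrite /g sgA twaddE /= !sgq.
have g0 : g 0 = 0.
  have := gA 0 0; rewrite c0 addr0 addr0.
  by move/(congr1 (fun z => z - g 0)); rewrite addrK subrr.
pose sb x := l (f x) - i (g (f x)) + sa (x - L (f x)).
have GaR x : Gb x -> Ga (x - L (f x)).
  by move=> Gx; apply/fK; [apply: (GbB) | rewrite fB // Lf subrr].
exists sb; split.
- move=> x y Gx Gy; rewrite /sb fA // gA !iA // -ic.
  have -> : x + y - L (f x + f y) = (x - L (f x)) + (y - L (f y)) - dl (f x) (f y).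
    exact: zid4.
  have Gx' := GaR x Gx; have Gy' := GaR y Gy.
  rewrite saB; [|exact: sc_add|exact: dlGa].
  rewrite saA // /d.
  exact: zid3.
- move=> x Gx; rewrite /sb qA // qB qi subr0 saq ?ql; last exact: GaR.
  by rewrite addrC subrK.

- move=> x Gx; rewrite /sb (proj2 (fK x (Gab x Gx)) Gx) l0 g0 i0 L0 !subr0 add0r //.
Qed.


Definition section_on (G E : zmodType) (q : E -> G) (P : G -> Prop) (s : G -> E) :=
  additive_on P s /\ forall x, P x -> q (s x) = x.

Lemma wf_irr (I : Type) (lt : I -> I -> Prop) : well_founded lt -> forall a, ~ lt a a.
Proof.
move=> wf a; elim: (wf a) => x _ IH Hxx; exact: (IH x Hxx Hxx).
Qed.

Lemma eklof (G E : zmodType) (q : E -> G) (qA : additive_on (fun _ => True) q)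
  (I : Type) (lt : I -> I -> Prop) (C : I -> G -> Prop)
  (wf : well_founded lt) (tr : forall a b c, lt a b -> lt b c -> lt a c)
  (tot : forall a b, lt a b \/ a = b \/ lt b a)
  (sC : forall a, subclosed (C a))
  (mono : forall a b x, lt a b -> C a x -> C b x)
  (min0 : forall a, (forall b, ~ lt b a) -> forall x, C a x -> x = 0)
  (cont : forall a, (exists b, lt b a) -> (forall b, lt b a -> exists c, lt b c /\ lt c a) ->
          forall x, C a x -> exists b, lt b a /\ C b x)
  (un : forall x, exists a, C a x)
  (step : forall a b, lt a b -> (forall c, lt a c -> ~ lt c b) ->
     forall sa, section_on q (C a) sa ->
     exists sb, section_on q (C b) sb /\ forall x, C a x -> sb x = sa x) :
  exists s : G -> E, additive_on (fun _ => True) s /\ forall x, q (s x) = x.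
Proof.
have irr := wf_irr wf.
have q0 : q 0 = 0 := ao0 (@sc_T _) qA.
pose ext a b (sa : G -> E) := epsilon (inhabits sa)
  (fun sb => section_on q (C b) sb /\ forall x, C a x -> sb x = sa x).
have extP a b sa : lt a b -> (forall c, lt a c -> ~ lt c b) -> section_on q (C a) sa ->
    section_on q (C b) (ext a b sa) /\ forall x, C a x -> ext a b sa x = sa x.
  by move=> ab nb hs; exact: (epsilon_spec (inhabits sa) (fun sb => section_on q (C b) sb /\ forall x, C a x -> sb x = sa x) (step a b ab nb sa hs)).
pose F (b : I) (rec : forall a, lt a b -> G -> E) : G -> E :=
  match excluded_middle_informative (exists a, lt a b /\ forall c, lt a c -> ~ lt c b) with
  | left Hp => let s := constructive_indefinite_description _ Hp in
               ext (proj1_sig s) b (rec (proj1_sig s) (proj1 (proj2_sig s)))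
  | right _ => fun x =>
      match excluded_middle_informative (exists a, lt a b /\ C a x) with
      | left H2 => let s := constructive_indefinite_description _ H2 in
                   rec (proj1_sig s) (proj1 (proj2_sig s)) x
      | right _ => 0
      end
  end.
pose S := Fix wf (fun _ => G -> E) F.
have SE b : S b = F b (fun a _ => S a).
  rewrite /S Fix_eq // => b' f g Hfg; rewrite /F.
  case: excluded_middle_informative => Hp; first by rewrite Hfg.
  apply: functional_extensionality => x.
  by case: excluded_middle_informative => H2; rewrite ?Hfg.
pose P b := section_on q (C b) (S b) /\ forall a, lt a b -> forall x, C a x -> S b x = S a x.
have Pall : forall b, P b.
  apply: (well_founded_ind wf) => b IH.
  rewrite /P SE /F.
  case: excluded_middle_informative => [Hp | Hn].
  - set s := constructive_indefinite_description _ Hp.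
    case: s => a [ab nb] /=.
    have [Hs Hag] := extP a b (S a) ab nb (IH a ab).1.
    simpl; split => // a' a'b x Cx.
    case: (tot a' a) => [a'a | [e | aa']]; last by case: (nb _ aa' a'b).
    + rewrite Hag; [exact: ((proj2 (IH a ab)) a' a'a x Cx) | exact: (mono _ _ _ a'a Cx)].
    + by subst a'; rewrite Hag.
  - set T := (fun x : G => _).
    have Tag a x : lt a b -> C a x -> T x = S a x.
      move=> ab Cx; rewrite /T.
      case: excluded_middle_informative => [H2|H2]; last by case: H2; exists a.
      set s := constructive_indefinite_description _ H2.
      case: s => a' [a'b Ca'x] /=.
      case: (tot a a') => [aa' | [<- // | a'a]].
      + exact: ((proj2 (IH a' a'b)) a aa' x Cx).
      + by apply/esym; exact: ((proj2 (IH a ab)) a' a'a x Ca'x).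
    split; last by move=> a ab x Cx; exact: Tag.
    case: (classic (exists a, lt a b)) => [[a0 a0b] | nob].
    + have lim : forall a, lt a b -> exists c, lt a c /\ lt c b.
        move=> a ab; apply: NNPP => Hc; apply: Hn; exists a; split => // c ac cb.
        by apply: Hc; exists c.
      have cnt := cont b (ex_intro _ a0 a0b) lim.
      have mx : forall a1 a2, lt a1 b -> lt a2 b -> exists m, lt m b /\
          (forall x, C a1 x -> C m x) /\ (forall x, C a2 x -> C m x).
        move=> a1 a2 h1 h2; case: (tot a1 a2) => [h | [<- | h]].
        * by exists a2; split=> //; split=> // x; exact: mono.
        * by exists a1.
        * by exists a1; split=> //; split=> // x; exact: mono.
      split.
      * move=> x y Cx Cy.
        have [ax [axb Cax]] := cnt x Cx.
        have [ay [ayb Cay]] := cnt y Cy.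
        have [az [azb Caz]] := cnt (x + y) (sc_add (sC b) Cx Cy).
        have [m1 [m1b [h1 h2]]] := mx _ _ axb ayb.
        have [m [mb [h3 h4]]] := mx _ _ m1b azb.
        rewrite (Tag m) ?(Tag m x) ?(Tag m y) //; try by apply: h3; auto.
        - by apply: (IH m mb).1.1; apply: h3; auto.
        - by apply: h4.
      * move=> x Cx; have [a [ab Cax]] := cnt x Cx.
        by rewrite (Tag a) //; exact: (proj2 (proj1 (IH a ab)) x Cax).
    + have z : forall x, C b x -> x = 0.
        move=> x; apply: (min0 b) => c cb; apply: (nob); by exists c.
      have T0 : T 0 = 0.
        rewrite /T; destruct (excluded_middle_informative _) as [[a [ab C0]]|] => //.
        by exfalso; apply: (nob); exists a.
      split.
      * by move=> x y /z -> /z ->; rewrite addr0 T0 addr0.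
      * by move=> x /z ->; rewrite T0.
pose ax x := proj1_sig (constructive_indefinite_description _ (un x)).
have Cax x : C (ax x) x := proj2_sig (constructive_indefinite_description _ (un x)).
pose le a b := a = b \/ lt a b.
have agr a m x : le a m -> C a x -> S m x = S a x.
  by case=> [-> // | am] Cx; exact: (proj2 (Pall m) a am x Cx).
have Cle a m x : le a m -> C a x -> C m x.
  by case=> [-> // | am] Cx; exact: (mono _ _ _ am Cx).
have letr a b c : le a b -> le b c -> le a c.
  case=> [-> // | ab]; case=> [<- | bc]; [by right | right; exact: (tr _ _ _ ab bc)].
have ub a1 a2 : exists m, le a1 m /\ le a2 m.
  case: (tot a1 a2) => [h | [<- | h]].
  - by exists a2; split; [right | left].
  - by exists a1; split; left.
  - by exists a1; split; [left | right].
exists (fun x => S (ax x) x); split.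
- move=> x y _ _ /=.
  have [m1 [h1 h2]] := ub (ax x) (ax y).
  have [m [h3 h4]] := ub m1 (ax (x + y)).
  have h1' := letr _ _ _ h1 h3; have h2' := letr _ _ _ h2 h3.
  rewrite -(agr _ _ _ h4 (Cax _)) -(agr _ _ _ h1' (Cax _)) -(agr _ _ _ h2' (Cax _)).
  exact: (proj1 (proj1 (Pall m)) x y (Cle _ _ _ h1' (Cax x)) (Cle _ _ _ h2' (Cax y))).
- by move=> x /=; exact: (proj2 (proj1 (Pall (ax x))) x (Cax x)).
Qed.



Lemma sr0 (R : {pred rat}) : subring_closed R -> 0 \in R.
Proof. by case=> R1 RB _; rewrite -(subrr 1); apply: RB. Qed.

Lemma srB (R : {pred rat}) x y : subring_closed R -> x \in R -> y \in R -> x - y \in R.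
Proof. by case=> _ RB _; apply: RB. Qed.

Lemma srM (R : {pred rat}) x y : subring_closed R -> x \in R -> y \in R -> x * y \in R.
Proof. by case=> _ _ RM; apply: RM. Qed.

Lemma srN (R : {pred rat}) x : subring_closed R -> x \in R -> - x \in R.
Proof. by move=> Rs Rx; rewrite -sub0r; apply: srB => //; exact: sr0. Qed.

Lemma srD (R : {pred rat}) x y : subring_closed R -> x \in R -> y \in R -> x + y \in R.
Proof. by move=> Rs Rx Ry; rewrite -[y]opprK; apply: srB => //; exact: srN. Qed.

Lemma srn (R : {pred rat}) (n : nat) : subring_closed R -> n%:R \in R.
Proof.
move=> Rs; elim: n => [|n IH]; first exact: sr0.
by rewrite -addn1 natrD; apply: srD => //; case: Rs.
Qed.

Lemma srz (R : {pred rat}) (z : int) : subring_closed R -> z%:~R \in R.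
Proof.
by move=> Rs; case: z => n; rewrite ?NegzE ?mulrNz ?intz; [exact: srn | apply: srN => //; exact: srn].
Qed.

Lemma srden (R : {pred rat}) r : subring_closed R -> r \in R -> ((denq r)%:~R)^-1 \in R.
Proof.
move=> Rs Rr.
have [u [v Huv]] := Bezoutz (numq r) (denq r).
have g1 : gcdz (numq r) (denq r) = 1 by rewrite /gcdz (eqP (coprime_num_den r)).
rewrite g1 in Huv.
have d0 : (denq r)%:~R != 0 :> rat by rewrite intr_eq0 denq_neq0.
have -> : ((denq r)%:~R)^-1 = u%:~R * r + v%:~R :> rat.
  rewrite -[in RHS](divq_num_den r).
  have : (u * numq r + v * denq r)%:~R = 1 :> rat by rewrite Huv.
  rewrite intrD !intrM => H.
  apply: (mulfI d0); rewrite mulfV // -[LHS]H; field.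
  exact: d0.
by apply: srD => //; [apply: srM => //|]; exact: srz.
Qed.

Lemma addf_mulz (A B : zmodType) (f : A -> B) (fA : forall x y, f (x + y) = f x + f y) x z :
  f (x *~ z) = f x *~ z.
Proof.
have f0 : f 0 = 0.
  by have := fA 0 0; rewrite addr0 => /(congr1 (fun w => w - f 0)); rewrite addrK subrr.
have fn n : f (x *+ n) = f x *+ n.
  by elim: n => [|n IH]; rewrite ?mulr0n // !mulrS fA IH.
have fN y : f (- y) = - f y.
  by apply/eqP; rewrite -subr_eq0 opprK -fA addNr f0.
case: z => n; first by rewrite -!pmulrn fn.
by rewrite NegzE !mulrNz fN -!pmulrn fn.
Qed.

Lemma act0 (R : {pred rat}) (M : zmodType) (act : rat -> M -> M) x :
  subring_closed R -> is_rmod R act -> act 0 x = 0.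
Proof.
move=> Rs [_ _ aD _]; have := aD 0 0 x (sr0 Rs) (sr0 Rs); rewrite addr0.
by move/(congr1 (fun w => w - act 0 x)); rewrite addrK subrr.
Qed.

Lemma actN (R : {pred rat}) (M : zmodType) (act : rat -> M -> M) r x :
  subring_closed R -> is_rmod R act -> r \in R -> act (- r) x = - act r x.
Proof.
move=> Rs Ha Rr; have [_ _ aD _] := Ha.
apply/eqP; rewrite -subr_eq0 opprK addrC -aD ?subrr ?(act0 _ Rs Ha) //; exact: srN.
Qed.

Lemma actadd (R : {pred rat}) (M : zmodType) (act : rat -> M -> M) r :
  is_rmod R act -> r \in R -> forall x y, act r (x + y) = act r x + act r y.
Proof. by move=> [_ aD _ _] Rr x y; apply: aD. Qed.

Lemma actz (R : {pred rat}) (M : zmodType) (act : rat -> M -> M) (z : int) x :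
  subring_closed R -> is_rmod R act -> act z%:~R x = x *~ z.
Proof.
move=> Rs Ha; have [a1 _ aD _] := Ha.
have an n : act n%:R x = x *+ n.
  elim: n => [|n IH]; first by rewrite (act0 _ Rs Ha).
  have Rn : (n%:R : rat) \in R by exact: srn.
  have R1 : (1 : rat) \in R by case: Rs.
  by rewrite -addn1 natrD aD // IH a1 addn1 mulrSr.
case: z => n; first exact: an.
rewrite NegzE mulrNz (actN _ Rs Ha); last exact: srz.
by rewrite mulrNz; congr (- _); exact: an.
Qed.

Lemma act_den (R : {pred rat}) (M : zmodType) (act : rat -> M -> M) (d : int) x :
  subring_closed R -> is_rmod R act -> d != 0 -> (d%:~R)^-1 \in R ->
  (act (d%:~R)^-1 x) *~ d = x.
Proof.
move=> Rs Ha d0 Rd; have [a1 _ _ aM] := Ha.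
rewrite -(actz _ _ Rs Ha) -aM ?mulfV ?a1 // ?intr_eq0 //; exact: srz.
Qed.


Lemma regroup (J : eqType) (V : zmodType) (R : {pred rat}) (Rs : subring_closed R)
  (phi : J -> rat -> V)
  (phiD : forall j r s, r \in R -> s \in R -> phi j (r + s) = phi j r + phi j s)
  (L : seq (J * rat)) : all (fun p => p.2 \in R) L ->
  \sum_(p <- L) phi p.1 p.2 =
  \sum_(j <- undup (map fst L)) phi j (\sum_(p <- L | p.1 == j) p.2).
Proof.
move=> /allP LR.
have phi0 j : phi j 0 = 0.
  have := phiD j 0 0 (sr0 Rs) (sr0 Rs); rewrite addr0.
  by move/(congr1 (fun w => w - phi j 0)); rewrite addrK subrr.
transitivity (\sum_(j <- undup (map fst L)) \sum_(p <- L | p.1 == j) phi p.1 p.2); last first.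
  apply: eq_bigr => j _; rewrite [in RHS]big_seq_cond.
  rewrite (@big_morph_in V rat R (phi j) 0 +%R 0 +%R).
  - by rewrite [LHS]big_seq_cond; apply: eq_bigr => p /andP [_ /eqP ->].
  - by move=> x y Rx Ry; apply: srD.
  - exact: sr0.
  - by move=> x y Rx Ry; apply: phiD.
  - exact: phi0.
  - by move=> p /andP [pL _]; apply: LR.
rewrite (eq_bigr (fun j => \sum_(p <- L) (if p.1 == j then phi p.1 p.2 else 0)));
  last by move=> j _; rewrite big_mkcond.
rewrite exchange_big /=.
apply: eq_big_seq => p pL.
rewrite (bigD1_seq p.1) ?undup_uniq ?mem_undup ?map_f //= eqxx big1 ?addr0 //.
by move=> j /negbTE; rewrite eq_sym => ->.
Qed.

Lemma free_ext (R : {pred rat}) (Rs : subring_closed R) (H G : zmodType)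
  (actH : rat -> H -> H) (actG : rat -> G -> G)
  (HaH : is_rmod R actH) (Hfree : free_rmod R actH) (HaG : is_rmod R actG)
  (Gtf : torsion_free G) : Ext_zero H G.
Proof.
move=> E i q iA qA iI qS qK.
have [J [b [_ indep span]]] := Hfree.
have [_ _ aD aM] := HaH.
have iA' : additive_on (fun _ => True) i by move=> x y _ _; exact: iA.
have qA' : additive_on (fun _ => True) q by move=> x y _ _; exact: qA.
have i0 : i 0 = 0 := ao0 (@sc_T _) iA'.
have q0 : q 0 = 0 := ao0 (@sc_T _) qA'.
have qB x y : q (x - y) = q x - q y by exact: (aoB (@sc_T _) qA').
have qi g : q (i g) = 0 by apply/qK; exists g.
have iz := addf_mulz iA; have qz := addf_mulz qA.
pose e j := proj1_sig (constructive_indefinite_description _ (qS (b j))).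
have qe j : q (e j) = b j := proj2_sig (constructive_indefinite_description _ (qS (b j))).
have uniq_y (y y' : E) (k : int) : k != 0 -> q y = q y' -> y *~ k = y' *~ k -> y = y'.
  move=> k0 qyy' ek.
  have : q (y - y') = 0 by rewrite qB qyy' subrr.
  move/qK => [g Hg].
  have : i (g *~ k) = i 0 by rewrite iz -Hg mulrzBl ek subrr i0.
  move/iI => gk0.
  have g0 : g = 0.
    clear ek; move: k0 gk0; case: k => [[|n]|n] //= _.
    - by rewrite -pmulrn; apply: Gtf.
    - by rewrite NegzE mulrNz -pmulrn => /eqP; rewrite oppr_eq0 => /eqP; apply: Gtf.
  by apply/eqP; rewrite -subr_eq0 Hg g0 i0.
have ni r : (numq r)%:~R = (denq r)%:~R * r :> rat.
  have dr := divq_num_den r; have d0 := denq_neq0 r.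
  move: dr d0; set n := numq r; set d := denq r => dr d0.
  by rewrite -[in RHS]dr mulrC divfK // intr_eq0.
pose spec j r (y : E) := y *~ denq r = e j *~ numq r /\ q y = actH r (b j).
pose u j r := epsilon (inhabits (0 : E)) (spec j r).
have uP j r : r \in R -> spec j r (u j r).
  move=> Rr; apply: epsilon_spec.
  have [y0 qy0] := qS (actH r (b j)).
  have Rd : ((denq r)%:~R : rat) \in R by exact: srz.
  have hq : q (y0 *~ denq r - e j *~ numq r) = 0.
    rewrite qB !qz qy0 qe -(actz _ _ Rs HaH) -aM // -ni (actz _ _ Rs HaH).
    exact: subrr.
  have [g Hg] := proj1 (qK _) hq.
  exists (y0 - i (actG ((denq r)%:~R)^-1 g)); split.
  - rewrite mulrzBl -iz (act_den _ Rs HaG) ?denq_neq0 //; last exact: srden.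
    by rewrite -Hg opprB addrC subrK.
  - by rewrite qB qi subr0.
have uD j r1 r2 : r1 \in R -> r2 \in R -> u j (r1 + r2) = u j r1 + u j r2.
  move=> R1 R2; have R3 : r1 + r2 \in R by exact: srD.
  have [h1 q1] := uP j r1 R1; have [h2 q2] := uP j r2 R2; have [h3 q3] := uP j _ R3.
  apply: (uniq_y _ _ (denq r1 * denq r2 * denq (r1 + r2))).
  - by rewrite !mulf_neq0 ?denq_neq0.
  - by rewrite q3 qA q1 q2 aD.
  rewrite mulrzDl.
  have e1 : denq r1 * denq r2 * denq (r1 + r2) = denq (r1 + r2) * (denq r1 * denq r2) by ring.
  have e2 : denq r1 * denq r2 * denq (r1 + r2) = denq r1 * (denq r2 * denq (r1 + r2)) by ring.
  have e3 : denq r1 * denq r2 * denq (r1 + r2) = denq r2 * (denq r1 * denq (r1 + r2)) by ring.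
  rewrite [X in u j (r1 + r2) *~ X]e1 [X in u j r1 *~ X]e2 [X in u j r2 *~ X]e3.
  rewrite !mulrzA h1 h2 h3 -!mulrzA -mulrzDr; congr (_ *~ _).
  apply: (@intr_inj rat); rewrite !intrD !intrM !ni; ring.
have u0 j : u j 0 = 0.
  have := uD j 0 0 (sr0 Rs) (sr0 Rs); rewrite addr0.
  by move/(congr1 (fun w => w - u j 0)); rewrite addrK subrr.
have uN j r : r \in R -> u j (- r) = - u j r.
  move=> Rr; apply/eqP; rewrite -subr_eq0 opprK addrC -uD ?subrr ?u0 //; exact: srN.
pose sumA (L : seq (J * rat)) := \sum_(p <- L) actH p.2 (b p.1).
pose sumU (L : seq (J * rat)) := \sum_(p <- L) u p.1 p.2.
have key L : all (fun p => p.2 \in R) L -> sumA L = 0 -> sumU L = 0.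
  move=> LR HA.
  have CR j : \sum_(p <- L | p.1 == j) p.2 \in R.
    rewrite big_seq_cond; apply: (big_ind (fun x => x \in R)).
    - exact: sr0.
    - by move=> x y Rx Ry; apply: srD.
    - by move=> p /andP [pL _]; exact: (allP LR).
  rewrite /sumA (regroup Rs (fun j r s => aD r s (b j)) LR) in HA.
  have C0 := indep _ (fun j => \sum_(p <- L | p.1 == j) p.2) (undup_uniq _) CR HA.
  rewrite /sumU (regroup Rs uD LR) big1_seq //.
  by move=> j /andP [_ jU]; rewrite C0 // u0.
have key2 L1 L2 : all (fun p => p.2 \in R) L1 -> all (fun p => p.2 \in R) L2 ->
    sumA L1 = sumA L2 -> sumU L1 = sumU L2.
  move=> LR1 LR2 HA.
  pose L := L1 ++ [seq (p.1, - p.2) | p <- L2].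
  have LR : all (fun p => p.2 \in R) L.
    rewrite all_cat LR1 /= all_map; apply/allP => p pL /=; apply: srN => //; exact: (allP LR2).
  have sAL : sumA L = sumA L1 - sumA L2.
    rewrite /sumA big_cat big_map /=; congr (_ + _).
    rewrite -sumrN big_seq [RHS]big_seq; apply: eq_bigr => p pL /=.
    by apply: (actN _ Rs HaH); exact: (allP LR2).
  have sUL : sumU L = sumU L1 - sumU L2.
    rewrite /sumU big_cat big_map /=; congr (_ + _).
    rewrite -sumrN big_seq [RHS]big_seq; apply: eq_bigr => p pL /=.
    by apply: uN; exact: (allP LR2).
  apply/eqP; rewrite -subr_eq0 -sUL; apply/eqP; apply: key => //.
  by rewrite sAL HA subrr.
have rep h : exists L, all (fun p => p.2 \in R) L /\ h = sumA L.
  have [s [c [cR ->]]] := span h I.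
  exists [seq (j, c j) | j <- s]; split; last by rewrite /sumA big_map.
  by rewrite all_map; apply/allP => j _ /=; exact: cR.
pose rp h := proj1_sig (constructive_indefinite_description _ (rep h)).
have rpP h : all (fun p => p.2 \in R) (rp h) /\ h = sumA (rp h) :=
  proj2_sig (constructive_indefinite_description _ (rep h)).
exists (fun h => sumU (rp h)); split.
- move=> h1 h2; rewrite /sumU -big_cat /=; apply: key2.
  + exact: (proj1 (rpP _)).
  + by rewrite all_cat (proj1 (rpP h1)) (proj1 (rpP h2)).
  + have -> : sumA (rp h1 ++ rp h2) = sumA (rp h1) + sumA (rp h2) by rewrite /sumA big_cat.
    by rewrite -(proj2 (rpP h1)) -(proj2 (rpP h2)) -(proj2 (rpP _)).
- move=> h; rewrite /sumU (big_morph q qA q0) [RHS](proj2 (rpP h)) /sumA.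
  rewrite big_seq [RHS]big_seq; apply: eq_bigr => p pL.
  exact: (uP _ _ (allP (proj1 (rpP h)) p pL)).2.
Qed.

Local Close Scope ring_scope.

Theorem corollary5p4 (R : {pred rat}) (Rsub : subring_closed R) (Phi : modclass)
  (HPhi : forall (H : zmodType) (actH : rat -> H -> H), Phi H actH ->
            is_rmod R actH /\ fin_rank_free_by_1 R actH)
  (G : zmodType) (actG : rat -> G -> G) (HGmod : is_rmod R actG)
  (HGtf : torsion_free G) (HGnuc : nucleus_is R G)
  (HGc : Phi_complete Phi G) (HGr : Phi_represented R Phi actG) :
  splitter G.
Proof.
move=> E i q iA qA iI qS qK.
have [I [lt [C [[wf [tr tot]] [sub mono] min0 [cont un] succ]]]] := HGr.
have sC a : subclosed (C a) by have [? ? ?] := sub a; split.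
have iA' : additive_on (fun _ => True) i by move=> x y _ _; exact: iA.
have qA' : additive_on (fun _ => True) q by move=> x y _ _; exact: qA.
have step : forall a b, lt a b -> (forall c, lt a c -> ~ lt c b) ->
    forall sa, section_on q (C a) sa ->
    exists sb, section_on q (C b) sb /\ forall x, C a x -> sb x = sa x.
  move=> a b ab nb sa [saA saq].
  have [H [actH [HP [f [fA fR fS fK]]]]] := succ a b ab nb.
  have HE : Ext_zero H G.
    case: HP => [HP | [Hm Hf]]; first exact: HGc HP.
    exact: (free_ext Rsub Hm Hf HGmod HGtf).
  have [sb [sbA sbq sbe]] := ext_step iA' qA' iI qS qK (sC a) (sC b)
    (fun x => mono a b x ab) fA fS fK saA saq HE.
  by exists sb; split => //; split.
have [s [sA sq]] := eklof qA' wf tr tot sC mono min0 cont un step.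
by exists s; split => // x y; apply: sA.
Qed.
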